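(* Fix an integer $r>0$ and let $\preccurlyeq$ be the relation on $\mathcal A$ defined below. Then: (a) $\preccurlyeq$ is a preorder (reflexive and transitive) on $\mathcal A$; (b) for $\mathbf a,\mathbf b\in\mathcal A$, both $\mathbf a\preccurlyeq\mathbf b$ and $\mathbf b\preccurlyeq\mathbf a$ hold if and only if $\dim\mathbf a=\dim\mathbf b$ and $a_i=b_i$ for all $0\le i\le\dim\mathbf a-r$; (c) for $0\le m<\infty$, an element $\mathbf b\in\mathcal A_m$ is a least element of $\mathcal A_m$ if and only if $\dim\mathbf b=m$ and $b_i=2$ for $0\le i\le m-r$; and $\mathbf b\in\mathcal A_\infty$ is a least element of $\mathcal A_\infty$ if and only if $b_i=2$ for all $i\ge0$.
   Context: Let $\mathcal A$ be the set of sequences $\mathbf a=(a_n)_{n\in\mathbb N}$ of nonnegative integers with $a_0>0$ such that for every $n$, if $a_n\le1$ then $a_i=0$ for all $i>n$. For $\mathbf a\in\mathcal A$ put $\dim\mathbf a=\sup\{n: a_n>0\}\in\mathbb N\cup\{\infty\}$; for $0\le m<\infty$ let $\mathcal A_m=\{\mathbf a\in\mathcal A:\dim\mathbf a\ge m\}$ and $\mathcal A_\infty=\bigcap_m\mathcal A_m$. For fixed $r>0$, define $\mathbf a\preccurlyeq\mathbf b$ iff $\dim\mathbf a\le\dim\mathbf b$ and, for every $n\in\mathbb N$, $a_n>b_n$ implies $\dim\mathbf a<n+r$ (where $\infty<n+r$ is false). An element $x$ of a subset $B$ is a least element of $B$ if $x\preccurlyeq b$ for all $b\in B$. *)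

(* Defs.v *)
From Stdlib Require Import Arith Lia ClassicalEpsilon.

Inductive natinf : Type := Fin (n : nat) | Inf.

Definition ni_le (x y : natinf) : Prop :=
  match x, y with
  | Fin a, Fin b => a <= b
  | _, Inf => True
  | Inf, Fin _ => False
  end.

Definition ni_lt_nat (x : natinf) (k : nat) : Prop :=
  match x with Fin d => d < k | Inf => False end.

Definition inA (a : nat -> nat) : Prop :=
  0 < a 0 /\ forall n, a n <= 1 -> forall i, n < i -> a i = 0.

Definition is_sup_support (a : nat -> nat) (N : nat) : Prop :=
  (forall n, 0 < a n -> n <= N) /\
  (forall M, (forall n, 0 < a n -> n <= M) -> N <= M).

(* dim a = sup {n : a n > 0} ∈ N ∪ {∞}; it is ∞ iff the set has no
   supremum in N, i.e. is unbounded. *)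
Definition dim (a : nat -> nat) : natinf :=
  match excluded_middle_informative (exists N, is_sup_support a N) with
  | left _ => Fin (epsilon (inhabits 0) (is_sup_support a))
  | right _ => Inf
  end.

Definition prec (r : nat) (a b : nat -> nat) : Prop :=
  ni_le (dim a) (dim b) /\
  forall n, b n < a n -> ni_lt_nat (dim a) (n + r).

Definition inAm (m : nat) (a : nat -> nat) : Prop := inA a /\ ni_le (Fin m) (dim a).
Definition inAinf (a : nat -> nat) : Prop := inA a /\ forall m, ni_le (Fin m) (dim a).

Definition least (r : nat) (B : (nat -> nat) -> Prop) (x : nat -> nat) : Prop :=
  B x /\ forall y, B y -> prec r x y.

(* "0 <= i <= d - r" where d ∈ N ∪ {∞} (integer subtraction; for d = ∞ always). *)
Definition idx_le (i r : nat) (d : natinf) : Prop :=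
  match d with Fin d => i + r <= d | Inf => True end.

(* Main.v *)
Require Import Defs.
From Stdlib Require Import Arith Lia ClassicalEpsilon.

Lemma sup_unique a N M : is_sup_support a N -> is_sup_support a M -> N = M.
Proof. intros [H1 H2] [H3 H4]. specialize (H2 M H3). specialize (H4 N H1). lia. Qed.

Lemma dim_fin a d : dim a = Fin d -> is_sup_support a d.
Proof.
  unfold dim. destruct excluded_middle_informative as [e|e]; intro H; [|discriminate].
  injection H as <-. apply epsilon_spec. exact e.
Qed.

Lemma dim_fin_intro a N : is_sup_support a N -> dim a = Fin N.
Proof.
  intro HN. unfold dim. destruct excluded_middle_informative as [e|e].
  - f_equal. apply (sup_unique a). apply epsilon_spec. exact e. exact HN.
  - exfalso. apply e. eauto.
Qed.

Lemma dim_inf a : dim a = Inf -> ~ exists N, is_sup_support a N.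
Proof.
  unfold dim. destruct excluded_middle_informative as [e|e]; intro H; [discriminate|exact e].
Qed.

Lemma bounded_sup a n : (forall i, n < i -> a i = 0) -> exists N, is_sup_support a N /\ N <= n.
Proof.
  induction n as [|n IH]; intro H.
  - exists 0. split; [split|lia].
    + intros k Hk. destruct k; [lia|]. rewrite H in Hk; lia.
    + intros; lia.
  - destruct (a (S n)) eqn:E.
    + destruct IH as [N [HN HNn]].
      * intros i Hi. destruct (Nat.eq_dec i (S n)); [subst; auto|apply H; lia].
      * exists N; split; [auto|lia].
    + exists (S n). split; [split|lia].
      * intros k Hk. destruct (le_lt_dec k (S n)); auto. rewrite H in Hk; lia.
      * intros M HM. apply HM. rewrite E. lia.
Qed.

Lemma small_dim a i : inA a -> a i <= 1 -> ni_le (dim a) (Fin i).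
Proof.
  intros [_ HA] Hi. destruct (bounded_sup a i (HA i Hi)) as [N [HN HNi]].
  rewrite (dim_fin_intro a N HN). exact HNi.
Qed.

Lemma all_inf a : (forall m, ni_le (Fin m) (dim a)) -> dim a = Inf.
Proof.
  intro H. destruct (dim a) eqn:E; auto. specialize (H (S n)). simpl in H. lia.
Qed.

Theorem proposition1p3 (r : nat) (hr : 0 < r) :
  (* (a) preorder on 𝒜 *)
  ((forall a, inA a -> prec r a a) /\
   (forall a b c, inA a -> inA b -> inA c -> prec r a b -> prec r b c -> prec r a c)) /\
  (* (b) *)
  (forall a b, inA a -> inA b ->
     (prec r a b /\ prec r b a <->
      dim a = dim b /\ forall i, idx_le i r (dim a) -> a i = b i)) /\
  (* (c) finite m *)
  (forall (m : nat) b, inAm m b ->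
     (least r (inAm m) b <-> dim b = Fin m /\ forall i, i + r <= m -> b i = 2)) /\
  (* (c) m = ∞ *)
  (forall b, inAinf b ->
     (least r inAinf b <-> forall i, b i = 2)).
Proof.
  split; [split|split; [|split]].
  - intros a _. split.
    + destruct (dim a); simpl; auto.
    + intros n Hn; lia.
  - intros a b c _ _ _ [H1 H2] [H3 H4]. split.
    + destruct (dim a), (dim b), (dim c); simpl in *; auto; lia.
    + intros n Hn. destruct (lt_dec (c n) (b n)) as [l|l].
      * specialize (H4 n l). destruct (dim a), (dim b); simpl in *; auto; lia.
      * apply H2. lia.
  - intros a b _ _. split.
    + intros [[H1 H2] [H3 H4]].
      assert (Ed : dim a = dim b).
      { destruct (dim a), (dim b); simpl in *; try tauto. f_equal; lia. }
      split; auto. intros i Hi.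
      destruct (lt_eq_lt_dec (a i) (b i)) as [[l|l]|l]; auto.
      * specialize (H4 i l). rewrite <- Ed in H4.
        destruct (dim a); simpl in *; lia.
      * specialize (H2 i l). destruct (dim a); simpl in *; lia.
    + intros [Ed He]. split; split.
      * rewrite Ed; destruct (dim b); simpl; auto.
      * intros n Hn. destruct (dim a) eqn:E; simpl.
        -- destruct (le_lt_dec (n + r) n0); auto.
           rewrite He in Hn; [lia|]. simpl; (auto || lia).
        -- rewrite He in Hn; [lia|]. simpl; (auto || lia).
      * rewrite Ed; destruct (dim b); simpl; auto.
      * intros n Hn. rewrite <- Ed. destruct (dim a) eqn:E; simpl.
        -- destruct (le_lt_dec (n + r) n0); auto.
           rewrite He in Hn; [lia|]. simpl; (auto || lia).
        -- rewrite He in Hn; [lia|]. simpl; (auto || lia).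
  - intros m b [HbA Hbm]. split.
    + intros [_ Hl].
      set (y := fun i => if i <? m then 2 else if i =? m then 1 else 0).
      assert (Hy : is_sup_support y m).
      { split.
        - intros n Hn. unfold y in Hn.
          destruct (n <? m) eqn:E1; [apply Nat.ltb_lt in E1; lia|].
          destruct (n =? m) eqn:E2; [apply Nat.eqb_eq in E2; lia|lia].
        - intros M HM. apply HM. unfold y. rewrite Nat.ltb_irrefl, Nat.eqb_refl. lia. }
      assert (Hdy := dim_fin_intro y m Hy).
      assert (HyA : inAm m y).
      { split; [split|].
        - unfold y. destruct (0 <? m) eqn:E1; [lia|]. apply Nat.ltb_ge in E1. destruct (0 =? m) eqn:E2; [lia|]. apply Nat.eqb_neq in E2; lia.
        - intros n Hn i Hi. unfold y in *.
          destruct (n <? m) eqn:E1; [lia|]. apply Nat.ltb_ge in E1.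
          destruct (i <? m) eqn:E3; [apply Nat.ltb_lt in E3; lia|].
          destruct (i =? m) eqn:E4; [apply Nat.eqb_eq in E4; lia|auto].
        - rewrite Hdy. simpl. lia. }
      destruct (Hl y HyA) as [H1 H2].
      rewrite Hdy in H1.
      assert (Ed : dim b = Fin m).
      { destruct (dim b); simpl in *; try tauto. f_equal; lia. }
      split; auto. intros i Hi.
      assert (yi : y i = 2).
      { unfold y. replace (i <? m) with true; auto. symmetry; apply Nat.ltb_lt; lia. }
      destruct (lt_eq_lt_dec (b i) 2) as [[l|l]|l]; auto.
      * pose proof (small_dim b i HbA ltac:(lia)) as S. rewrite Ed in S. simpl in S. lia.
      * rewrite <- yi in l. specialize (H2 i l). rewrite Ed in H2. simpl in H2. lia.
    + intros [Ed H2]. split; [split; auto|].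
      intros y [HyA Hym]. split.
      * rewrite Ed. exact Hym.
      * intros n Hn. rewrite Ed. simpl.
        destruct (le_lt_dec (n + r) m) as [l|l]; auto.
        rewrite H2 in Hn; auto.
        pose proof (small_dim y n HyA ltac:(lia)) as S.
        destruct (dim y); simpl in *; try tauto; lia.
  - intros b [HbA Hbi]. pose proof (all_inf b Hbi) as Eb. split.
    + intros [_ Hl].
      set (y := fun _ : nat => 2).
      assert (Edy : dim y = Inf).
      { destruct (dim y) eqn:E; auto. apply dim_fin in E. destruct E as [E _].
        specialize (E (S n)). unfold y in E. lia. }
      assert (HyA : inAinf y).
      { split; [split|].
        - unfold y; lia.
        - intros n Hn. unfold y in Hn. lia.
        - rewrite Edy. simpl. auto. }
      destruct (Hl y HyA) as [_ H2]. intro i.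
      destruct (lt_eq_lt_dec (b i) 2) as [[l|l]|l]; auto.
      * pose proof (small_dim b i HbA ltac:(lia)) as S. rewrite Eb in S. simpl in S. tauto.
      * specialize (H2 i l). rewrite Eb in H2. simpl in H2. tauto.
    + intros H2. split; [split; auto|].
      intros y [HyA Hyi]. pose proof (all_inf y Hyi) as Ey. split.
      * rewrite Ey. destruct (dim b); simpl; auto.
      * intros n Hn. rewrite H2 in Hn.
        pose proof (small_dim y n HyA ltac:(lia)) as S. rewrite Ey in S. simpl in S. tauto.
Qed.
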